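(* Let $n\ge3$, let $p:[\mathcal Q:\xi]\to[\mathcal H:\partial]$ be a trivial fibration and $f:[\mathcal Q:\xi]\to[\mathcal G:\delta]$ a morphism of reduced $n$-crossed complexes, and let $\nabla^f=(p,f):\mathcal Q\to\mathcal H\times\mathcal G$. Then the composite $\pi_1\circ\rho:\mathcal Q^{\nabla^f_n}\to\mathcal H\times\mathcal G\to\mathcal H$ (where $\pi_1$ is the projection) is a trivial fibration.
   Context: A reduced $n$-crossed complex $[C:\partial]$ is a sequence of groups and homomorphisms $C_n\xrightarrow{\partial_n}C_{n-1}\to\cdots\to C_2\xrightarrow{\partial_2}C_1$ together with an action of $C_1$ on each $C_k$ ($k\ge2$), such that $\partial_2:C_2\to C_1$ is a crossed module, $C_k$ is abelian for $k\ge3$, each $\partial_k$ is $C_1$-equivariant, $\partial_{k-1}\partial_k$ is trivial, and $\partial_2(C_2)$ acts trivially on $C_k$ for $k\ge3$. Morphisms are families of homomorphisms commuting with differentials and actions; products are degreewise. Homotopy groups: $\pi_1(C)=C_1/\partial_2(C_2)$, $\pi_k(C)=\ker\partial_k/\partial_{k+1}(C_{k+1})$ for $2\le k\le n-1$, $\pi_n(C)=\ker\partial_n$. A weak equivalence induces isomorphisms on all $\pi_k$, $1\le k\le n$; a fibration is surjective in every degree; a trivial fibration is both. The $n$-pushout: given $\nabla:[\mathcal Q:\xi]\to[\mathcal K:\kappa]$ (here $\mathcal K=\mathcal H\times\mathcal G$, $\nabla=(p,f)$), $\mathcal Q^{\nabla_n}$ equals $\mathcal Q$ in degrees $\le n-2$,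 has degree $n$ group $\mathcal K_n$ and degree $n-1$ group $P=\mathcal Q_{n-1}\times^{\mathcal Q_n}\mathcal K_n$, the quotient of the (semi)direct product $\mathcal Q_{n-1}\ltimes\mathcal K_n$ (for $n=3$, $\mathcal Q_2$ acts on $\mathcal K_3$ via $\nabla_1\circ\xi_2$; for $n\ge4$ the product is direct) by the normal subgroup of elements $(\xi_n(x)^{-1},\nabla_n(x))$, $x\in\mathcal Q_n$; elements are written $[a,(b,c)]$. Differentials: $(b,c)\mapsto[1,(b,c)]$ and $[a,(b,c)]\mapsto\xi_{n-1}(a)$. The canonical morphism $\rho:\mathcal Q^{\nabla_n}\to\mathcal K$ is the identity in degree $n$, $[a,(b,c)]\mapsto\nabla_{n-1}(a)\kappa_n(b,c)$ in degree $n-1$, and $\nabla_k$ in degrees $\le n-2$; the canonical $\iota:\mathcal Q\to\mathcal Q^{\nabla_n}$ is $\nabla_n$ in degree $n$, $a\mapsto[a,(1,1)]$ in degree $n-1$, identity below, and $\rho\circ\iota=\nabla$. *)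

(* Defs.v *)
From Stdlib Require Import Arith ClassicalEpsilon.


Record RawGrp := mkRawGrp {
  carrier :> Type;
  gmul : carrier -> carrier -> carrier;
  gone : carrier;
  ginv : carrier -> carrier }.

Arguments gmul {r} _ _.
Arguments gone {r}.
Arguments ginv {r} _.

Definition is_group (G : RawGrp) : Prop :=
  (forall x y z : G, gmul x (gmul y z) = gmul (gmul x y) z) /\
  (forall x : G, gmul gone x = x) /\
  (forall x : G, gmul x gone = x) /\
  (forall x : G, gmul (ginv x) x = gone) /\
  (forall x : G, gmul x (ginv x) = gone).

Definition is_abelian (G : RawGrp) : Prop := forall x y : G, gmul x y = gmul y x.

Definition is_hom (G H : RawGrp) (f : G -> H) : Prop :=
  forall x y : G, f (gmul x y) = gmul (f x) (f y).

Arguments is_hom {G H} f.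

Definition prodGrp (A B : RawGrp) : RawGrp :=
  @mkRawGrp (carrier A * carrier B)%type
    (fun x y => (gmul (fst x) (fst y), gmul (snd x) (snd y)))
    (gone, gone)
    (fun x => (ginv (fst x), ginv (snd x))).

(* semidirect product A |x B with A acting on B (on the left) via phi:
   (a,b)(a',b') = (a a', b (a.b')) *)
Definition semidirect (A B : RawGrp) (phi : A -> B -> B) : RawGrp :=
  @mkRawGrp (carrier A * carrier B)%type
    (fun x y => (gmul (fst x) (fst y), gmul (snd x) (phi (fst x) (snd y))))
    (gone, gone)
    (fun x => (ginv (fst x), phi (ginv (fst x)) (ginv (snd x)))).

(* quotient of G by (the normal subgroup given by) the predicate N:
   elements are the classes  x N = { y | x^-1 y \in N } *)
Definition qcls (G : RawGrp) (N : G -> Prop) (x : G) : G -> Prop :=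
  fun y => N (gmul (ginv x) y).

Arguments qcls {G} N x _.

Definition qcarrier (G : RawGrp) (N : G -> Prop) : Type :=
  { P : G -> Prop | exists x : G, P = qcls N x }.

Arguments qcarrier {G} N.

Definition qclass (G : RawGrp) (N : G -> Prop) (x : G) : qcarrier N :=
  exist _ (qcls N x) (ex_intro _ x eq_refl).

Arguments qclass {G} N x.

Definition qrep (G : RawGrp) (N : G -> Prop) (P : qcarrier N) : G :=
  proj1_sig (constructive_indefinite_description _ (proj2_sig P)).

Arguments qrep {G} {N} P.

Definition quotGrp (G : RawGrp) (N : G -> Prop) : RawGrp :=
  @mkRawGrp (qcarrier N)
    (fun P P' => qclass N (gmul (qrep P) (qrep P')))
    (qclass N gone)
    (fun P => qclass N (ginv (qrep P))).

(* ---------- raw reduced crossed complexes ----------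
   grp k = C_k ;  bd k : C_(k+1) -> C_k  is the differential  ∂_(k+1) ;
   act k g x = action of g \in C_1 on x \in C_k  (k >= 2). *)
Record RawRCC := mkRawRCC {
  grp : nat -> RawGrp;
  bd : forall k, grp (S k) -> grp k;
  act : forall k, grp 1 -> grp k -> grp k }.

Definition is_RCC (n : nat) (C : RawRCC) : Prop :=
  (forall k, 1 <= k <= n -> is_group (grp C k)) /\
  (forall k, 1 <= k < n -> is_hom (bd C k)) /\
  (forall k, 2 <= k <= n -> forall g, is_hom (act C k g)) /\
  (forall k, 2 <= k <= n -> forall x, act C k gone x = x) /\
  (forall k, 2 <= k <= n -> forall g h x,
      act C k (gmul g h) x = act C k g (act C k h x)) /\
  (forall g x, bd C 1 (act C 2 g x) = gmul (gmul g (bd C 1 x)) (ginv g)) /\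
  (forall x y, act C 2 (bd C 1 x) y = gmul (gmul x y) (ginv x)) /\
  (forall k, 3 <= k <= n -> is_abelian (grp C k)) /\
  (forall k, 2 <= k < n -> forall g x,
      bd C k (act C (S k) g x) = act C k g (bd C k x)) /\
  (forall k, 1 <= k -> S k < n -> forall x, bd C k (bd C (S k) x) = gone) /\
  (forall k, 3 <= k <= n -> forall y x, act C k (bd C 1 y) x = x).

Definition RCCmap (C D : RawRCC) : Type := forall k, grp C k -> grp D k.

Definition is_morphism (n : nat) (C D : RawRCC) (f : RCCmap C D) : Prop :=
  (forall k, 1 <= k <= n -> is_hom (f k)) /\
  (forall k, 1 <= k < n -> forall x, f k (bd C k x) = bd D k (f (S k) x)) /\
  (forall k, 2 <= k <= n -> forall g x, f k (act C k g x) = act D k (f 1 g) (f k x)).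

(* cycles: ker ∂_k (all of C_1 for k = 1) *)

Definition ker_pred (C : RawRCC) (k : nat) : grp C k -> Prop :=
  match k as k0 return grp C k0 -> Prop with
  | O => fun _ => True
  | S k' => fun x => match k' with O => True | S _ => bd C k' x = gone end
  end.

(* boundaries: ∂_(k+1)(C_(k+1)) for k < n, trivial subgroup for k = n *)
Definition im_pred (n : nat) (C : RawRCC) (k : nat) (x : grp C k) : Prop :=
  if k <? n then exists y, bd C k y = x else x = gone.

(* f induces a bijection (= group isomorphism) on π_k for all 1 <= k <= n,
   where π_k = ker_pred / im_pred *)
Definition weak_equivalence (n : nat) (C D : RawRCC) (f : RCCmap C D) : Prop :=
  forall k, 1 <= k <= n ->
    (forall y : grp D k, ker_pred D k y ->
        exists x : grp C k, ker_pred C k x /\ im_pred n D k (gmul (f k x) (ginv y))) /\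
    (forall x x' : grp C k, ker_pred C k x -> ker_pred C k x' ->
        im_pred n D k (gmul (f k x) (ginv (f k x'))) -> im_pred n C k (gmul x (ginv x'))).

Definition fibration (n : nat) (C D : RawRCC) (f : RCCmap C D) : Prop :=
  forall k, 1 <= k <= n -> forall y : grp D k, exists x, f k x = y.


Definition trivial_fibration (n : nat) (C D : RawRCC) (f : RCCmap C D) : Prop :=
  fibration n C D f /\ weak_equivalence n C D f.


Definition prodRCC (C D : RawRCC) : RawRCC :=
  @mkRawRCC (fun k => prodGrp (grp C k) (grp D k))
    (fun k x => (bd C k (fst x), bd D k (snd x)))
    (fun k g x => (act C k (fst g) (fst x), act D k (snd g) (snd x))).

Definition pairM (Q C D : RawRCC) (p : RCCmap Q C) (f : RCCmap Q D)
  : RCCmap Q (prodRCC C D) := fun k x => (p k x, f k x).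

Definition proj1M (C D : RawRCC) : RCCmap (prodRCC C D) C := fun k x => fst x.

Definition compM (A B C : RawRCC) (g : RCCmap B C) (f : RCCmap A B) : RCCmap A C :=
  fun k x => g k (f k x).

Section Pushout.
Variables (n : nat) (Q K : RawRCC) (nab : RCCmap Q K).

(* action of Q_k on K_(k+1) used in the semidirect product at degree k = n-1:
   via ∇_1 ∘ ξ_2 when k = 2 (i.e. n = 3), trivial otherwise (n >= 4) *)
Definition po_phi (k : nat) : grp Q k -> grp K (S k) -> grp K (S k) :=
  match k as k0 return grp Q k0 -> grp K (S k0) -> grp K (S k0) with
  | 2 => fun a c => act K 3 (nab 1 (bd Q 1 a)) c
  | _ => fun _ c => c
  end.

Definition po_semi (k : nat) : RawGrp := semidirect (grp Q k) (grp K (S k)) (po_phi k).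

Definition po_N (k : nat) (z : po_semi k) : Prop :=
  exists x : grp Q (S k), z = (ginv (bd Q k x), nab (S k) x).

(* P = Q_(k) x^{Q_(k+1)} K_(k+1) ,  used for k = n-1 *)
Definition po_P (k : nat) : RawGrp := quotGrp (po_semi k) (po_N k).

Inductive postag := Below | Penult | Top | Above.

Definition pos (k : nat) : postag :=
  if k <? n - 1 then Below
  else if k =? n - 1 then Penult
  else if k =? n then Top
  else Above.

Definition grp_of (t : postag) (k : nat) : RawGrp :=
  match t with
  | Below => grp Q k
  | Penult => po_P k
  | Top => grp K k
  | Above => grp Q k
  end.

Definition po_grp (k : nat) : RawGrp := grp_of (pos k) k.

Definition po_bd (k : nat) : po_grp (S k) -> po_grp k :=
  match pos (S k) as t1 return grp_of t1 (S k) -> po_grp k with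
  | Top =>
      match pos k as t2 return grp K (S k) -> grp_of t2 k with
      | Penult => fun c => qclass (po_N k) (gone, c)
      | _ => fun _ => gone
      end
  | Penult =>
      match pos k as t2 return po_P (S k) -> grp_of t2 k with
      | Below => fun z => bd Q k (fst (qrep z))
      | _ => fun _ => gone
      end
  | Below =>
      match pos k as t2 return grp Q (S k) -> grp_of t2 k with
      | Below => fun x => bd Q k x
      | _ => fun _ => gone
      end
  | Above =>
      match pos k as t2 return grp Q (S k) -> grp_of t2 k with
      | Above => fun x => bd Q k x
      | _ => fun _ => gone
      end
  end.

(* view an element of the degree-1 group (which is Q_1 since n >= 3) in Q_1 *)
Definition po_toQ1 : po_grp 1 -> grp Q 1 :=
  match pos 1 as t return grp_of t 1 -> grp Q 1 with
  | Below => fun g => g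
  | Above => fun g => g
  | Penult => fun z => fst (qrep z)
  | Top => fun _ => gone
  end.

Definition po_act (k : nat) (g : po_grp 1) : po_grp k -> po_grp k :=
  let g' := po_toQ1 g in
  match pos k as t return grp_of t k -> grp_of t k with
  | Below => act Q k g'
  | Above => act Q k g'
  | Top => act K k (nab 1 g')
  | Penult => fun z =>
      qclass (po_N k) (act Q k g' (fst (qrep z)), act K (S k) (nab 1 g') (snd (qrep z)))
  end.

Definition pushout : RawRCC := @mkRawRCC po_grp po_bd po_act.

Definition po_rho : RCCmap pushout K := fun k =>
  match pos k as t return grp_of t k -> grp K k with
  | Below => nab k
  | Above => nab k
  | Top => fun c => c
  | Penult => fun z => gmul (nab k (fst (qrep z))) (bd K k (snd (qrep z)))
  end.

End Pushout.

(* Main.v *)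
Require Import Defs.
From Stdlib Require Import Arith Lia ClassicalEpsilon FunctionalExtensionality PropExtensionality ProofIrrelevance.

Arguments pos : simpl never.

Section GroupFacts.
Context {G : RawGrp} (HG : is_group G).
Lemma gA (x y z : G) : gmul x (gmul y z) = gmul (gmul x y) z. Proof. apply HG. Qed.
Lemma g1l (x : G) : gmul gone x = x. Proof. apply HG. Qed.
Lemma g1r (x : G) : gmul x gone = x. Proof. apply HG. Qed.
Lemma gVl (x : G) : gmul (ginv x) x = gone. Proof. apply HG. Qed.
Lemma gVr (x : G) : gmul x (ginv x) = gone. Proof. apply HG. Qed.
Lemma gcanl (a x y : G) : gmul a x = gmul a y -> x = y.
Proof. intro H. rewrite <- (g1l x), <- (g1l y), <- (gVl a), <- !gA, H. reflexivity. Qed.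
Lemma gcanr (a x y : G) : gmul x a = gmul y a -> x = y.
Proof. intro H. rewrite <- (g1r x), <- (g1r y), <- (gVr a), !gA, H. reflexivity. Qed.
Lemma ginv_uniq (x y : G) : gmul x y = gone -> y = ginv x.
Proof. intro H. apply (gcanl x). rewrite H, gVr. reflexivity. Qed.
Lemma ginvM (x y : G) : ginv (gmul x y) = gmul (ginv y) (ginv x).
Proof. symmetry. apply ginv_uniq. rewrite <- gA, (gA y), gVr, g1l, gVr. reflexivity. Qed.
Lemma ginvK (x : G) : ginv (ginv x) = x.
Proof. symmetry. apply ginv_uniq. apply gVl. Qed.
Lemma ginv1 : ginv (@gone G) = gone.
Proof. symmetry. apply ginv_uniq. apply g1l. Qed.
Lemma gKl (x y : G) : gmul (ginv x) (gmul x y) = y.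
Proof. rewrite gA, gVl, g1l. reflexivity. Qed.
Lemma gKr (x y : G) : gmul x (gmul (ginv x) y) = y.
Proof. rewrite gA, gVr, g1l. reflexivity. Qed.
Lemma gdiv_eq (x y : G) : gmul x (ginv y) = gone -> x = y.
Proof. intro H. apply (gcanr (ginv y)). rewrite H, gVr. reflexivity. Qed.
Lemma gdiv1 (x y : G) : x = y -> gmul x (ginv y) = gone.
Proof. intros ->. apply gVr. Qed.
End GroupFacts.

Lemma hom1 {G H : RawGrp} (HG : is_group G) (HH : is_group H) (f : G -> H) :
  is_hom f -> f gone = gone.
Proof. intro h. apply (gcanl HH (f gone)). rewrite <- h, (g1l HG), (g1r HH). reflexivity. Qed.
Lemma homV {G H : RawGrp} (HG : is_group G) (HH : is_group H) (f : G -> H) :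
  is_hom f -> forall x, f (ginv x) = ginv (f x).
Proof. intros h x. apply (ginv_uniq HH). rewrite <- h, (gVr HG). apply (hom1 HG HH f h). Qed.

Lemma sig_eq {A} {P : A -> Prop} (a b : sig P) : proj1_sig a = proj1_sig b -> a = b.
Proof. destruct a, b; simpl; intro; subst; f_equal; apply proof_irrelevance. Qed.

Section Quot.
Context {G : RawGrp} (HG : is_group G) (N : G -> Prop)
  (N1 : N gone) (NM : forall x y, N x -> N y -> N (gmul x y))
  (NV : forall x, N x -> N (ginv x))
  (NC : forall g x, N x -> N (gmul (gmul g x) (ginv g))).

Lemma qclass_eq (x y : G) : N (gmul (ginv x) y) -> qclass N x = qclass N y.
Proof.
  intro h. apply sig_eq. simpl. extensionality z. apply propositional_extensionality.
  unfold qcls. split; intro h2.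
  - replace (gmul (ginv y) z) with (gmul (ginv (gmul (ginv x) y)) (gmul (ginv x) z)).
    + apply NM; auto.
    + rewrite (ginvM HG), (ginvK HG), <- (gA HG), (gKr HG). reflexivity.
  - replace (gmul (ginv x) z) with (gmul (gmul (ginv x) y) (gmul (ginv y) z)).
    + apply NM; auto.
    + rewrite <- (gA HG), (gKr HG). reflexivity.
Qed.

Lemma qclass_inv (x y : G) : qclass N x = qclass N y -> N (gmul (ginv x) y).
Proof.
  intro h. apply (f_equal (@proj1_sig _ _)) in h. simpl in h.
  change (qcls N x y). rewrite h. unfold qcls. rewrite (gVl HG). exact N1.
Qed.

Lemma qrep_eq (P : qcarrier N) : proj1_sig P = qcls N (qrep P).
Proof. unfold qrep. destruct (constructive_indefinite_description _ _). simpl. exact e. Qed.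

Lemma class_rep (P : qcarrier N) : qclass N (qrep P) = P.
Proof. apply sig_eq. simpl. symmetry. apply qrep_eq. Qed.

Lemma class_surj (P : qcarrier N) : exists a, P = qclass N a.
Proof. exists (qrep P). symmetry. apply class_rep. Qed.

Lemma qrep_class (x : G) : exists m, N m /\ qrep (qclass N x) = gmul x m.
Proof.
  exists (gmul (ginv x) (qrep (qclass N x))). split.
  - apply qclass_inv. rewrite class_rep. reflexivity.
  - rewrite (gKr HG). reflexivity.
Qed.

Lemma qmul_class (x y : G) :
  gmul (r := quotGrp G N) (qclass N x) (qclass N y) = qclass N (gmul x y).
Proof.
  simpl. destruct (qrep_class x) as [m1 [h1 ->]]. destruct (qrep_class y) as [m2 [h2 ->]].
  symmetry. apply qclass_eq.
  rewrite (ginvM HG), <- !(gA HG), (gKl HG).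
  replace (gmul (ginv y) (gmul m1 (gmul y m2))) with
    (gmul (gmul (gmul (ginv y) m1) (ginv (ginv y))) m2).
  - apply NM; auto.
  - rewrite (ginvK HG), <- !(gA HG). simpl. reflexivity.
Qed.

Lemma qinv_class (x : G) :
  ginv (r := quotGrp G N) (qclass N x) = qclass N (ginv x).
Proof.
  simpl. destruct (qrep_class x) as [m1 [h1 ->]].
  apply qclass_eq. rewrite !(ginvM HG), !(ginvK HG).
  apply NC. exact h1.
Qed.

Lemma quot_group : is_group (quotGrp G N).
Proof.
  repeat split.
  - intros x y z. destruct (class_surj x) as [a ->]. destruct (class_surj y) as [b ->].
    destruct (class_surj z) as [c ->]. rewrite !qmul_class, (gA HG). reflexivity.
  - intros x. destruct (class_surj x) as [a ->]. change (@gone (quotGrp G N)) with (qclass N gone).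
    rewrite qmul_class, (g1l HG). reflexivity.
  - intros x. destruct (class_surj x) as [a ->]. change (@gone (quotGrp G N)) with (qclass N gone).
    rewrite qmul_class, (g1r HG). reflexivity.
  - intros x. destruct (class_surj x) as [a ->]. rewrite qinv_class, qmul_class, (gVl HG). reflexivity.
  - intros x. destruct (class_surj x) as [a ->]. rewrite qinv_class, qmul_class, (gVr HG). reflexivity.
Qed.
End Quot.


Section RCCfacts.
Context {n : nat} {C : RawRCC} (HC : is_RCC n C).
Lemma rgrp k : 1 <= k <= n -> is_group (grp C k). Proof. apply HC. Qed.
Lemma rbdhom k : 1 <= k < n -> is_hom (bd C k). Proof. apply HC. Qed.
Lemma racthom k : 2 <= k <= n -> forall g, is_hom (act C k g). Proof. apply HC. Qed.
Lemma ract1 k : 2 <= k <= n -> forall x, act C k gone x = x. Proof. apply HC. Qed.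
Lemma ractM k : 2 <= k <= n -> forall g h x, act C k (gmul g h) x = act C k g (act C k h x).
Proof. apply HC. Qed.
Lemma rxm1 : forall g x, bd C 1 (act C 2 g x) = gmul (gmul g (bd C 1 x)) (ginv g).
Proof. apply HC. Qed.
Lemma rxm2 : forall x y, act C 2 (bd C 1 x) y = gmul (gmul x y) (ginv x).
Proof. apply HC. Qed.
Lemma rab k : 3 <= k <= n -> is_abelian (grp C k). Proof. apply HC. Qed.
Lemma reqv k : 2 <= k < n -> forall g x, bd C k (act C (S k) g x) = act C k g (bd C k x).
Proof. apply HC. Qed.
Lemma rbdbd k : 1 <= k -> S k < n -> forall x, bd C k (bd C (S k) x) = gone.
Proof. apply HC. Qed.
Lemma rtriv k : 3 <= k <= n -> forall y x, act C k (bd C 1 y) x = x.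
Proof. apply HC. Qed.

Lemma ractV k : 2 <= k <= n -> forall g x, act C k g (ginv x) = ginv (act C k g x).
Proof. intros. apply (homV (rgrp k ltac:(lia)) (rgrp k ltac:(lia))). apply racthom; lia. Qed.
Lemma ract_one k : 2 <= k <= n -> forall g, act C k g gone = gone.
Proof. intros. apply (hom1 (rgrp k ltac:(lia)) (rgrp k ltac:(lia))). apply racthom; lia. Qed.

Lemma rcentral (Hn : 3 <= n) j : j = n - 1 -> forall (y : grp C (S j)) (z : grp C j),
  gmul (bd C j y) z = gmul z (bd C j y).
Proof.
  intros Hj y z.
  assert (j = 2 \/ 3 <= j) as [->|Hj3] by lia.
  - assert (HG2 := rgrp 2 ltac:(lia)).
    pose proof (rxm2 (bd C 2 y) z) as E.
    rewrite (rbdbd 1 ltac:(lia) ltac:(lia)), (ract1 2 ltac:(lia)) in E.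
    apply (gcanr HG2 (ginv (bd C 2 y))). rewrite <- E, <- (gA HG2), (gVr HG2), (g1r HG2). reflexivity.
  - apply (rab j). lia.
Qed.
End RCCfacts.

Section Morph.
Context {n : nat} {C D : RawRCC} {f : RCCmap C D} (Hf : is_morphism n C D f).
Lemma mhom k : 1 <= k <= n -> is_hom (f k). Proof. apply Hf. Qed.
Lemma mbd k : 1 <= k < n -> forall x, f k (bd C k x) = bd D k (f (S k) x). Proof. apply Hf. Qed.
Lemma mact k : 2 <= k <= n -> forall g x, f k (act C k g x) = act D k (f 1 g) (f k x). Proof. apply Hf. Qed.
End Morph.

Lemma mcomp n A B C (f : RCCmap A B) (g : RCCmap B C) :
  is_morphism n A B f -> is_morphism n B C g -> is_morphism n A C (compM A B C g f).
Proof.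
  intros Hf Hg. unfold compM, is_morphism. repeat match goal with |- _ /\ _ => split end.
  - intros k Hk x y. rewrite (mhom Hf k Hk), (mhom Hg k Hk). reflexivity.
  - intros k Hk x. rewrite (mbd Hf k Hk), (mbd Hg k Hk). reflexivity.
  - intros k Hk a x. rewrite (mact Hf k Hk), (mact Hg k Hk). reflexivity.
Qed.

Lemma prod_group (A B : RawGrp) : is_group A -> is_group B -> is_group (prodGrp A B).
Proof.
  intros HA HB; unfold is_group. repeat match goal with |- _ /\ _ => split end; simpl.
  - intros [] [] []; simpl. rewrite (gA HA), (gA HB). reflexivity.
  - intros []; simpl. rewrite (g1l HA), (g1l HB). reflexivity.
  - intros []; simpl. rewrite (g1r HA), (g1r HB). reflexivity.
  - intros []; simpl. rewrite (gVl HA), (gVl HB). reflexivity.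
  - intros []; simpl. rewrite (gVr HA), (gVr HB). reflexivity.
Qed.

Lemma prod_RCC n H G : is_RCC n H -> is_RCC n G -> is_RCC n (prodRCC H G).
Proof.
  intros HH HG; unfold is_RCC. repeat match goal with |- _ /\ _ => split end; simpl.
  - intros k Hk. apply prod_group; [apply (rgrp HH) | apply (rgrp HG)]; auto.
  - intros k Hk [] []; simpl. rewrite (rbdhom HH k Hk), (rbdhom HG k Hk). reflexivity.
  - intros k Hk [] [] []; simpl. rewrite (racthom HH k Hk), (racthom HG k Hk). reflexivity.
  - intros k Hk []; simpl. rewrite (ract1 HH k Hk), (ract1 HG k Hk). reflexivity.
  - intros k Hk [] [] []; simpl. rewrite (ractM HH k Hk), (ractM HG k Hk). reflexivity.
  - intros [] []; simpl. rewrite (rxm1 HH), (rxm1 HG). reflexivity.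
  - intros [] []; simpl. rewrite (rxm2 HH), (rxm2 HG). reflexivity.
  - intros k Hk [] []; simpl. rewrite (rab HH k Hk), (rab HG k Hk). reflexivity.
  - intros k Hk [] []; simpl. rewrite (reqv HH k Hk), (reqv HG k Hk). reflexivity.
  - intros k Hk1 Hk2 []; simpl. rewrite (rbdbd HH k Hk1 Hk2), (rbdbd HG k Hk1 Hk2). reflexivity.
  - intros k Hk [] []; simpl. rewrite (rtriv HH k Hk), (rtriv HG k Hk). reflexivity.
Qed.

Lemma pair_morph n Q H G p f : is_morphism n Q H p -> is_morphism n Q G f ->
  is_morphism n Q (prodRCC H G) (pairM Q H G p f).
Proof.
  intros Hp Hf. unfold pairM, is_morphism. repeat match goal with |- _ /\ _ => split end; simpl.
  - intros k Hk x y. rewrite (mhom Hp k Hk), (mhom Hf k Hk). reflexivity.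
  - intros k Hk x. rewrite (mbd Hp k Hk), (mbd Hf k Hk). reflexivity.
  - intros k Hk a x. rewrite (mact Hp k Hk), (mact Hf k Hk). reflexivity.
Qed.

Lemma proj1_morph n H G : is_morphism n (prodRCC H G) H (proj1M H G).
Proof. unfold proj1M. repeat split; simpl; intros; reflexivity. Qed.

Lemma posB n k : k < n - 1 -> pos n k = Below.
Proof. intro h. unfold pos. rewrite (proj2 (Nat.ltb_lt _ _) h). reflexivity. Qed.
Lemma posP n k : 1 <= n -> k = n - 1 -> pos n k = Penult.
Proof. intros h1 h. unfold pos. rewrite (proj2 (Nat.ltb_ge k (n-1)) ltac:(lia)).
  rewrite (proj2 (Nat.eqb_eq _ _) h). reflexivity. Qed.
Lemma posT n k : 1 <= n -> k = n -> pos n k = Top.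
Proof. intros h1 h. unfold pos. rewrite (proj2 (Nat.ltb_ge k (n-1)) ltac:(lia)).
  rewrite (proj2 (Nat.eqb_neq k (n-1)) ltac:(lia)), (proj2 (Nat.eqb_eq _ _) h). reflexivity. Qed.
Lemma posA n k : n < k -> pos n k = Above.
Proof. intros h. unfold pos. rewrite (proj2 (Nat.ltb_ge k (n-1)) ltac:(lia)).
  rewrite (proj2 (Nat.eqb_neq k (n-1)) ltac:(lia)), (proj2 (Nat.eqb_neq k n) ltac:(lia)). reflexivity. Qed.
Lemma pos_inv n k : 1 <= n ->
  (pos n k = Below -> k < n - 1) /\ (pos n k = Penult -> k = n - 1) /\
  (pos n k = Top -> k = n) /\ (pos n k = Above -> n < k).
Proof.
  intros h. unfold pos.
  destruct (Nat.ltb_spec k (n-1)); [repeat split; try discriminate; auto|].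
  destruct (Nat.eqb_spec k (n-1)); [repeat split; try discriminate; auto|].
  destruct (Nat.eqb_spec k n); [repeat split; try discriminate; auto|].
  repeat split; try discriminate; intros; lia.
Qed.


Set Default Proof Using "All".
Section PO.
Context (n : nat) (Q K : RawRCC) (nab : RCCmap Q K)
  (Hn : 3 <= n) (HQ : is_RCC n Q) (HK : is_RCC n K) (Hnab : is_morphism n Q K nab).

Lemma phi_triv k a c : po_phi Q K nab k a c = c.
Proof.
  destruct k as [|[|[|k]]]; try reflexivity. simpl.
  rewrite (mbd Hnab 1 ltac:(lia)), (rtriv HK 3 ltac:(lia)). reflexivity.
Qed.

Lemma semi_mulE j (x y : po_semi Q K nab j) :
  gmul x y = (gmul (fst x) (fst y), gmul (snd x) (snd y)).
Proof. destruct x, y. unfold po_semi, semidirect. simpl. rewrite phi_triv. reflexivity. Qed.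
Lemma semi_invE j (x : po_semi Q K nab j) : ginv x = (ginv (fst x), ginv (snd x)).
Proof. destruct x. unfold po_semi, semidirect. simpl. rewrite phi_triv. reflexivity. Qed.
Lemma semi_oneE j : (@gone (po_semi Q K nab j)) = (gone, gone).
Proof. reflexivity. Qed.

Section J.
Variable j : nat.
Hypothesis Hj : j = n - 1.
Let GQ := rgrp HQ j ltac:(lia).
Let GQ1 := rgrp HQ (S j) ltac:(lia).
Let GK := rgrp HK (S j) ltac:(lia).
Let GKj := rgrp HK j ltac:(lia).
Let bdh := rbdhom HQ j ltac:(lia).
Let nabh := mhom Hnab (S j) ltac:(lia).

Lemma semi_group : is_group (po_semi Q K nab j).
Proof.
  unfold is_group. repeat match goal with |- _ /\ _ => split end.
  - intros [] [] []. rewrite !semi_mulE. simpl. rewrite (gA GQ), (gA GK). reflexivity.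
  - intros []. rewrite !semi_mulE. simpl. rewrite (g1l GQ), (g1l GK). reflexivity.
  - intros []. rewrite !semi_mulE. simpl. rewrite (g1r GQ), (g1r GK). reflexivity.
  - intros []. rewrite semi_mulE, semi_invE. simpl. rewrite (gVl GQ), (gVl GK). reflexivity.
  - intros []. rewrite semi_mulE, semi_invE. simpl. rewrite (gVr GQ), (gVr GK). reflexivity.
Qed.

Let NN := po_N Q K nab j.

Lemma PN1 : NN gone.
Proof.
  exists gone. rewrite (hom1 GQ1 GQ _ bdh), (ginv1 GQ), (hom1 GQ1 GK _ nabh). reflexivity.
Qed.
Lemma PNM x y : NN x -> NN y -> NN (gmul x y).
Proof.
  intros [u ->] [v ->]. exists (gmul v u). rewrite semi_mulE. simpl.
  rewrite bdh, nabh, (ginvM GQ), (rab HK (S j) ltac:(lia) (nab (S j) v)). reflexivity.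
Qed.
Lemma PNV x : NN x -> NN (ginv x).
Proof.
  intros [u ->]. exists (ginv u). rewrite semi_invE. simpl.
  rewrite (homV GQ1 GQ _ bdh), (homV GQ1 GK _ nabh). reflexivity.
Qed.
Lemma PNC g x : NN x -> NN (gmul (gmul g x) (ginv g)).
Proof.
  intros [u ->]. exists u. rewrite !semi_mulE, semi_invE. simpl.
  rewrite <- (homV GQ1 GQ _ bdh).
  rewrite <- (rcentral HQ Hn j Hj (ginv u) (fst g)).
  rewrite <- (gA GQ), (gVr GQ), (g1r GQ).
  rewrite (rab HK (S j) ltac:(lia) (snd g) (nab (S j) u)).
  rewrite <- (gA GK), (gVr GK), (g1r GK). reflexivity.
Qed.

Lemma P_group : is_group (po_P Q K nab j).
Proof. apply quot_group. apply semi_group. exact PN1. exact PNM. exact PNV. exact PNC. Qed.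

Lemma Pmul a c a' c' :
  gmul (r := po_P Q K nab j) (qclass NN (a, c)) (qclass NN (a', c')) =
  qclass NN (gmul a a', gmul c c').
Proof. unfold po_P. rewrite (qmul_class semi_group NN PN1 PNM PNV PNC), semi_mulE. reflexivity. Qed.

Lemma Pinv a c :
  ginv (r := po_P Q K nab j) (qclass NN (a, c)) = qclass NN (ginv a, ginv c).
Proof. unfold po_P. rewrite (qinv_class semi_group NN PN1 PNM PNV PNC), semi_invE. reflexivity. Qed.

Lemma Psurj (z : po_P Q K nab j) : exists a c, z = qclass NN (a, c).
Proof.
  destruct (class_surj NN z) as [[a c] ->]. exists a, c. reflexivity.
Qed.

Lemma Pdecomp a c : exists x, qrep (qclass NN (a, c)) =
  (gmul a (ginv (bd Q j x)), gmul c (nab (S j) x)).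
Proof.
  destruct (qrep_class semi_group NN PN1 (a,c)) as [m [[x ->] E]].
  exists x. rewrite E, semi_mulE. reflexivity.
Qed.

Lemma Peq a c x : qclass NN (gmul a (ginv (bd Q j x)), gmul c (nab (S j) x)) = qclass NN (a, c).
Proof.
  symmetry. apply (qclass_eq semi_group NN PNM PNV).
  rewrite semi_mulE, semi_invE. simpl. rewrite (gKl GQ), (gKl GK). exists x. reflexivity.
Qed.

Lemma Pinj a c a' c' : qclass NN (a, c) = qclass NN (a', c') ->
  exists x, a' = gmul a (ginv (bd Q j x)) /\ c' = gmul c (nab (S j) x).
Proof.
  intro E. apply (qclass_inv semi_group NN PN1) in E.
  rewrite semi_mulE, semi_invE in E. simpl in E. destruct E as [x E].
  injection E as E1 E2. exists x. split.
  - rewrite <- E1, (gKr GQ). reflexivity.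
  - rewrite <- E2, (gKr GK). reflexivity.
Qed.

Lemma P_rho a c :
  gmul (nab j (fst (qrep (qclass NN (a, c))))) (bd K j (snd (qrep (qclass NN (a, c))))) =
  gmul (nab j a) (bd K j c).
Proof.
  destruct (Pdecomp a c) as [x ->]. simpl.
  assert (Hb : is_hom (bd K j)) by (apply (rbdhom HK j); lia).
  assert (Hn' : is_hom (nab j)) by (apply (mhom Hnab j); lia).
  rewrite Hn', Hb, (homV GQ GKj _ Hn'), (mbd Hnab j ltac:(lia)).
  set (w := bd K j (nab (S j) x)).
  rewrite <- !(gA GKj). f_equal. unfold w. rewrite <- (rcentral HK Hn j Hj (nab (S j) x) (bd K j c)), (gKl GKj). reflexivity.
Qed.

Lemma P_act g a c :
  qclass NN (act Q j g (fst (qrep (qclass NN (a, c)))), act K (S j) (nab 1 g) (snd (qrep (qclass NN (a, c))))) =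
  qclass NN (act Q j g a, act K (S j) (nab 1 g) c).
Proof.
  destruct (Pdecomp a c) as [x ->]. simpl.
  rewrite (racthom HQ j ltac:(lia)), (racthom HK (S j) ltac:(lia)).
  rewrite (ractV HQ j ltac:(lia)), <- (reqv HQ j ltac:(lia)).
  rewrite <- (mact Hnab (S j) ltac:(lia)).
  apply Peq.
Qed.

End J.
Lemma P_bdQ k' (Hk : S k' = n - 1) a c :
  bd Q k' (fst (qrep (qclass (po_N Q K nab (S k')) (a, c)))) = bd Q k' a.
Proof.
  destruct (Pdecomp (S k') Hk a c) as [x ->]. simpl.
  rewrite (rbdhom HQ k' ltac:(lia)).
  rewrite (homV (rgrp HQ (S k') ltac:(lia)) (rgrp HQ k' ltac:(lia)) _ (rbdhom HQ k' ltac:(lia))).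
  rewrite (rbdbd HQ k' ltac:(lia) ltac:(lia)), (ginv1 (rgrp HQ k' ltac:(lia))), (g1r (rgrp HQ k' ltac:(lia))).
  reflexivity.
Qed.



Ltac pinv E := match type of E with pos ?n ?k = _ =>
  let h := fresh "h" in pose proof (pos_inv n k ltac:(lia)) as h; rewrite E in h;
  let a:=fresh "pv" in let b:= fresh "pv" in let c := fresh "pv" in let d:= fresh "pv" in
  destruct h as (a&b&c&d); try specialize (a eq_refl); try specialize (b eq_refl);
  try specialize (c eq_refl); try specialize (d eq_refl) end.

Arguments po_P : simpl never.
Arguments po_semi : simpl never.
Arguments qclass : simpl never.

Lemma L_grp k : 1 <= k <= n -> is_group (po_grp n Q K nab k).
Proof.
  intro Hk. unfold po_grp. destruct (pos n k) eqn:E; pinv E; cbn [grp_of]; try (exfalso; lia).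
  - apply (rgrp HQ); lia.
  - apply (P_group k); lia.
  - apply (rgrp HK); lia.
Qed.

Lemma L_bd_hom k : 1 <= k < n -> is_hom (po_bd n Q K nab k).
Proof.
  intro Hk. unfold is_hom, po_bd, po_grp.
  destruct (pos n (S k)) eqn:E1; pinv E1; destruct (pos n k) eqn:E2; pinv E2; cbn [grp_of];
    try (exfalso; lia).
  - exact (rbdhom HQ k ltac:(lia)).
  - intros x y. destruct (Psurj (S k) ltac:(lia) x) as (a&c&->).
    destruct (Psurj (S k) ltac:(lia) y) as (a'&c'&->).
    rewrite (Pmul (S k) ltac:(lia)), !(P_bdQ k ltac:(lia)).
    apply (rbdhom HQ k ltac:(lia)).
  - intros x y. rewrite (Pmul k ltac:(lia)), (g1l (rgrp HQ k ltac:(lia))). reflexivity.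
Qed.

Ltac unf := unfold pushout in *; cbn [grp bd act] in *; unfold is_hom, po_act, po_bd, po_toQ1, po_grp, po_rho in *.
Ltac pos1 := rewrite (posB n 1 ltac:(lia)).

Let GQ1 := rgrp HQ 1 ltac:(lia).
Let GK1 := rgrp HK 1 ltac:(lia).
Let nab1 : is_hom (nab 1) := mhom Hnab 1 ltac:(lia).

Lemma L_act_hom k : 2 <= k <= n -> forall g, is_hom (po_act n Q K nab k g).
Proof.
  intro Hk. unf. pos1. destruct (pos n k) eqn:E; pinv E; cbn [grp_of]; try (exfalso; lia); intro g.
  - exact (racthom HQ k ltac:(lia) g).
  - intros x y. destruct (Psurj k ltac:(lia) x) as (a&c&->).
    destruct (Psurj k ltac:(lia) y) as (a'&c'&->).
    rewrite (Pmul k ltac:(lia)), !(P_act k ltac:(lia)), (Pmul k ltac:(lia)).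
    rewrite (racthom HQ k ltac:(lia)), (racthom HK (S k) ltac:(lia)). reflexivity.
  - exact (racthom HK k ltac:(lia) _).
Qed.

Lemma L_act_one k : 2 <= k <= n -> forall x, po_act n Q K nab k gone x = x.
Proof.
  intro Hk. unf. pos1. destruct (pos n k) eqn:E; pinv E; cbn [grp_of]; try (exfalso; lia); intro x.
  - exact (ract1 HQ k ltac:(lia) x).
  - destruct (Psurj k ltac:(lia) x) as (a&c&->).
    rewrite (P_act k ltac:(lia)), (hom1 GQ1 GK1 _ nab1), (ract1 HQ k ltac:(lia)),
      (ract1 HK (S k) ltac:(lia)). reflexivity.
  - rewrite (hom1 GQ1 GK1 _ nab1). exact (ract1 HK k ltac:(lia) x).
Qed.

Lemma L_act_mul k : 2 <= k <= n -> forall g h x,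
  po_act n Q K nab k (gmul g h) x = po_act n Q K nab k g (po_act n Q K nab k h x).
Proof.
  intro Hk. unf. pos1. destruct (pos n k) eqn:E; pinv E; cbn [grp_of]; try (exfalso; lia); intros g h x.
  - exact (ractM HQ k ltac:(lia) g h x).
  - destruct (Psurj k ltac:(lia) x) as (a&c&->).
    rewrite (P_act k ltac:(lia) (gmul g h)), (P_act k ltac:(lia) h), (P_act k ltac:(lia) g).
    rewrite nab1, (ractM HQ k ltac:(lia)), (ractM HK (S k) ltac:(lia)).
    reflexivity.
  - rewrite nab1. exact (ractM HK k ltac:(lia) _ _ x).
Qed.

Lemma L_xm1 : forall g x, po_bd n Q K nab 1 (po_act n Q K nab 2 g x) =
  gmul (gmul g (po_bd n Q K nab 1 x)) (ginv g).
Proof.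
  unf. pos1. destruct (pos n 2) eqn:E; pinv E; cbn [grp_of]; try (exfalso; lia); intros g x.
  - exact (rxm1 HQ g x).
  - rewrite (P_bdQ 1 ltac:(lia)). apply (rxm1 HQ).
Qed.

Lemma L_xm2 : forall x y, po_act n Q K nab 2 (po_bd n Q K nab 1 x) y =
  gmul (gmul x y) (ginv x).
Proof.
  unf. pos1. destruct (pos n 2) eqn:E; pinv E; cbn [grp_of]; try (exfalso; lia); intros x y.
  - exact (rxm2 HQ x y).
  - destruct (Psurj 2 ltac:(lia) x) as (a&c&->).
    destruct (Psurj 2 ltac:(lia) y) as (a'&c'&->).
    rewrite (P_bdQ 1 ltac:(lia)), (P_act 2 ltac:(lia)), (Pinv 2 ltac:(lia)), !(Pmul 2 ltac:(lia)).
    rewrite (rxm2 HQ), (mbd Hnab 1 ltac:(lia)), (rtriv HK 3 ltac:(lia)).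
    rewrite (rab HK 3 ltac:(lia) c c'), <- (gA (rgrp HK 3 ltac:(lia))), (gVr (rgrp HK 3 ltac:(lia))),
      (g1r (rgrp HK 3 ltac:(lia))). reflexivity.
Qed.

Lemma L_abel k : 3 <= k <= n -> is_abelian (po_grp n Q K nab k).
Proof.
  intro Hk. unfold is_abelian, po_grp. destruct (pos n k) eqn:E; pinv E; cbn [grp_of]; try (exfalso; lia).
  - exact (rab HQ k ltac:(lia)).
  - intros x y. destruct (Psurj k ltac:(lia) x) as (a&c&->).
    destruct (Psurj k ltac:(lia) y) as (a'&c'&->).
    rewrite !(Pmul k ltac:(lia)), (rab HQ k ltac:(lia) a), (rab HK (S k) ltac:(lia) c). reflexivity.
  - exact (rab HK k ltac:(lia)).
Qed.

Lemma L_eqv k : 2 <= k < n -> forall g x,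
  po_bd n Q K nab k (po_act n Q K nab (S k) g x) = po_act n Q K nab k g (po_bd n Q K nab k x).
Proof.
  intro Hk. unf. pos1.
  destruct (pos n (S k)) eqn:E1; pinv E1; destruct (pos n k) eqn:E2; pinv E2; cbn [grp_of];
    try (exfalso; lia); intros g x.
  - exact (reqv HQ k ltac:(lia) g x).
  - destruct (Psurj (S k) ltac:(lia) x) as (a&c&->).
    rewrite (P_act (S k) ltac:(lia)), !(P_bdQ k ltac:(lia)). apply (reqv HQ k ltac:(lia)).
  - rewrite (P_act k ltac:(lia)), (ract_one HQ k ltac:(lia)). reflexivity.
Qed.

Lemma L_bdbd k : 1 <= k -> S k < n -> forall x,
  po_bd n Q K nab k (po_bd n Q K nab (S k) x) = gone.
Proof.
  intros Hk1 Hk2. unf.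
  destruct (pos n (S (S k))) eqn:E1; pinv E1; destruct (pos n (S k)) eqn:E2; pinv E2;
  destruct (pos n k) eqn:E3; pinv E3; cbn [grp_of]; try (exfalso; lia); intros x.
  - exact (rbdbd HQ k Hk1 Hk2 x).
  - exact (rbdbd HQ k Hk1 Hk2 _).
  - rewrite (P_bdQ k ltac:(lia)).
    exact (hom1 (rgrp HQ (S k) ltac:(lia)) (rgrp HQ k ltac:(lia)) _ (rbdhom HQ k ltac:(lia))).
Qed.

Lemma L_triv k : 3 <= k <= n -> forall y x,
  po_act n Q K nab k (po_bd n Q K nab 1 y) x = x.
Proof.
  intros Hk. unf. pos1.
  destruct (pos n 2) eqn:E1; pinv E1; destruct (pos n k) eqn:E2; pinv E2; cbn [grp_of];
    try (exfalso; lia); intros y x.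
  - exact (rtriv HQ k ltac:(lia) y x).
  - destruct (Psurj k ltac:(lia) x) as (a&c&->).
    rewrite (P_act k ltac:(lia)), (rtriv HQ k ltac:(lia)), (mbd Hnab 1 ltac:(lia)),
      (rtriv HK (S k) ltac:(lia)). reflexivity.
  - rewrite (mbd Hnab 1 ltac:(lia)), (rtriv HK k ltac:(lia)). reflexivity.
  - rewrite (mbd Hnab 1 ltac:(lia)), (rtriv HK k ltac:(lia)). reflexivity.
Qed.

Lemma L_RCC : is_RCC n (pushout n Q K nab).
Proof.
  unfold is_RCC. cbn [grp bd act pushout].
  repeat match goal with |- _ /\ _ => split end.
  - exact L_grp.
  - exact L_bd_hom.
  - exact L_act_hom.
  - exact L_act_one.
  - exact L_act_mul.
  - exact L_xm1.
  - exact L_xm2.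
  - exact L_abel.
  - exact L_eqv.
  - exact L_bdbd.
  - exact L_triv.
Qed.

Lemma L_rho_hom k : 1 <= k <= n -> is_hom (po_rho n Q K nab k).
Proof.
  intro Hk. unf. destruct (pos n k) eqn:E; pinv E; cbn [grp_of]; try (exfalso; lia).
  - exact (mhom Hnab k ltac:(lia)).
  - intros x y. destruct (Psurj k ltac:(lia) x) as (a&c&->).
    destruct (Psurj k ltac:(lia) y) as (a'&c'&->).
    rewrite (Pmul k ltac:(lia)), !(P_rho k ltac:(lia)).
    assert (GK := rgrp HK k ltac:(lia)).
    rewrite (mhom Hnab k ltac:(lia)), (rbdhom HK k ltac:(lia)).
    rewrite <- !(gA GK). f_equal. rewrite !(gA GK). f_equal.
    symmetry. apply (rcentral HK Hn k ltac:(lia)).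
  - intros x y. reflexivity.
Qed.

Lemma L_rho_bd k : 1 <= k < n -> forall x,
  po_rho n Q K nab k (po_bd n Q K nab k x) = bd K k (po_rho n Q K nab (S k) x).
Proof.
  intro Hk. unf.
  destruct (pos n (S k)) eqn:E1; pinv E1; destruct (pos n k) eqn:E2; pinv E2; cbn [grp_of];
    try (exfalso; lia); intros x.
  - exact (mbd Hnab k Hk x).
  - rewrite (rbdhom HK k Hk), (rbdbd HK k ltac:(lia) ltac:(lia)), (g1r (rgrp HK k ltac:(lia))).
    exact (mbd Hnab k Hk _).
  - rewrite (P_rho k ltac:(lia)).
    rewrite (hom1 (rgrp HQ k ltac:(lia)) (rgrp HK k ltac:(lia)) _ (mhom Hnab k ltac:(lia))).
    apply (g1l (rgrp HK k ltac:(lia))).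
Qed.

Lemma L_rho_act k : 2 <= k <= n -> forall g x,
  po_rho n Q K nab k (po_act n Q K nab k g x) =
  act K k (po_rho n Q K nab 1 g) (po_rho n Q K nab k x).
Proof.
  intro Hk. unf. pos1. destruct (pos n k) eqn:E; pinv E; cbn [grp_of]; try (exfalso; lia); intros g x.
  - exact (mact Hnab k Hk g x).
  - destruct (Psurj k ltac:(lia) x) as (a&c&->).
    rewrite (P_act k ltac:(lia)), !(P_rho k ltac:(lia)).
    rewrite (mact Hnab k Hk), (reqv HK k ltac:(lia)), (racthom HK k Hk). reflexivity.
  - reflexivity.
Qed.

Lemma L_rho_morph : is_morphism n (pushout n Q K nab) K (po_rho n Q K nab).
Proof.
  unfold is_morphism. cbn [grp bd act pushout].
  repeat match goal with |- _ /\ _ => split end.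
  - exact L_rho_hom.
  - exact L_rho_bd.
  - exact L_rho_act.
Qed.

End PO.


Arguments po_P : simpl never.
Arguments po_semi : simpl never.
Arguments qclass : simpl never.

Ltac pinv E := match type of E with pos ?n ?k = _ =>
  let h := fresh "h" in pose proof (pos_inv n k ltac:(lia)) as h; rewrite E in h;
  let a:=fresh "pv" in let b:= fresh "pv" in let c := fresh "pv" in let d:= fresh "pv" in
  destruct h as (a&b&c&d); try specialize (a eq_refl); try specialize (b eq_refl);
  try specialize (c eq_refl); try specialize (d eq_refl) end.

Lemma central_div {X : RawGrp} (HX : is_group X) (x y u u' : X) :
  (forall z, gmul u z = gmul z u) -> (forall z, gmul u' z = gmul z u') ->
  gmul (gmul x u) (ginv (gmul y u')) = gmul (gmul x (ginv y)) (gmul u (ginv u')).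
Proof.
  intros hu hu'.
  assert (hv' : forall z, gmul (ginv u') z = gmul z (ginv u')).
  { intro z. apply (gcanl HX u'). rewrite (gKr HX), (gA HX), hu', <- (gA HX), (gVr HX), (g1r HX).
    reflexivity. }
  rewrite (ginvM HX), <- !(gA HX). f_equal.
  rewrite (hv' (ginv y)), (gA HX), hu, <- (gA HX). reflexivity.
Qed.

Section Final.
Context (n : nat) (Q H G : RawRCC) (p : RCCmap Q H) (f : RCCmap Q G)
  (Hn : 3 <= n) (HQ : is_RCC n Q) (HH : is_RCC n H) (HG : is_RCC n G)
  (Hp : is_morphism n Q H p) (Htf : trivial_fibration n Q H p) (Hf : is_morphism n Q G f).

Let K := prodRCC H G.
Let nab := pairM Q H G p f.
Let HK : is_RCC n K := prod_RCC n H G HH HG.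
Let Hnab : is_morphism n Q K nab := pair_morph n Q H G p f Hp Hf.

Local Notation Psurj' := (Psurj n Q K nab Hn HQ HK Hnab).
Local Notation P_bdQ' := (P_bdQ n Q K nab Hn HQ HK Hnab).
Local Notation P_rho' := (P_rho n Q K nab Hn HQ HK Hnab).
Local Notation Pmul' := (Pmul n Q K nab Hn HQ HK Hnab).
Local Notation Pinv' := (Pinv n Q K nab Hn HQ HK Hnab).
Local Notation Peq' := (Peq n Q K nab Hn HQ HK Hnab).
Local Notation Pinj' := (Pinj n Q K nab Hn HQ HK Hnab).

Lemma T_fib : fibration n (pushout n Q K nab) H
  (compM _ K H (proj1M H G) (po_rho n Q K nab)).
Proof.
  unfold fibration, compM, proj1M, pushout. cbn [grp]. unfold po_rho, po_grp.
  intros k Hk. destruct (pos n k) eqn:E; pinv E; cbn [grp_of]; try (exfalso; lia); intro y.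
  - destruct (proj1 Htf k Hk y) as [x Hx]. exists x. exact Hx.
  - destruct (proj1 Htf k Hk y) as [a Ha]. exists (qclass (po_N Q K nab k) (a, gone)).
    rewrite (P_rho' k ltac:(lia)).
    rewrite (hom1 (rgrp HK (S k) ltac:(lia)) (rgrp HK k ltac:(lia)) _ (rbdhom HK k ltac:(lia))).
    simpl. rewrite (g1r (rgrp HH k ltac:(lia))). exact Ha.
  - exists (y, gone). reflexivity.
Qed.


Ltac prep := unfold compM, proj1M, pushout, im_pred in *; cbn [grp bd act ker_pred] in *;
  unfold po_rho, po_bd, po_grp in *.

Lemma T_we : weak_equivalence n (pushout n Q K nab) H
  (compM _ K H (proj1M H G) (po_rho n Q K nab)).
Proof.
  intros k Hk. destruct (proj2 Htf k Hk) as [HA HB]. revert HA HB.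
  destruct k as [|[|k']]; [lia| |].
  - prep. rewrite (posB n 1 ltac:(lia)).
    replace (1 <? n) with true in * by (symmetry; apply Nat.ltb_lt; lia).
    destruct (pos n 2) eqn:E2; pinv E2; cbn [grp_of]; try (exfalso; lia); intros HA HB.
    + exact (conj HA HB).
    + split.
      * intros y Hy. destruct (HA y Hy) as (x & Hx & Hw). exists x. exact (conj Hx Hw).
      * intros x x' Hx Hx' Him. destruct (HB x x' Hx Hx' Him) as (w & Hw).
        exists (qclass (po_N Q K nab 2) (w, gone)). rewrite (P_bdQ' 1 ltac:(lia)). exact Hw.
  - prep.
    destruct (pos n (S (S (S k')))) eqn:E1; pinv E1; destruct (pos n (S (S k'))) eqn:E2; pinv E2;
    destruct (pos n (S k')) eqn:E3; pinv E3; cbn [grp_of]; try (exfalso; lia); intros HA HB.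
    + exact (conj HA HB).
    + replace (S (S k') <? n) with true in * by (symmetry; apply Nat.ltb_lt; lia). split.
      * intros y Hy. destruct (HA y Hy) as (x & Hx & Hw). exists x. exact (conj Hx Hw).
      * intros x x' Hx Hx' Him. destruct (HB x x' Hx Hx' Him) as (w & Hw).
        exists (qclass (po_N Q K nab (S (S (S k')))) (w, gone)). rewrite (P_bdQ' (S (S k')) ltac:(lia)). exact Hw.
    + replace (S (S k') <? n) with true in * by (symmetry; apply Nat.ltb_lt; lia). split.
      * intros y Hy. destruct (HA y Hy) as (a & Ha & (h & Hh)).
        exists (qclass (po_N Q K nab (S (S k'))) (a, gone)).
        rewrite (P_bdQ' (S k') ltac:(lia)), (P_rho' (S (S k')) ltac:(lia)).
        split; [exact Ha|]. exists h. rewrite Hh.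
        rewrite (hom1 (rgrp HK (S (S (S k'))) ltac:(lia)) (rgrp HK (S (S k')) ltac:(lia)) _
          (rbdhom HK (S (S k')) ltac:(lia))).
        simpl. rewrite (g1r (rgrp HH (S (S k')) ltac:(lia))). reflexivity.
      * intros z z'. destruct (Psurj' (S (S k')) ltac:(lia) z) as (a&c&->).
        destruct (Psurj' (S (S k')) ltac:(lia) z') as (a'&c'&->).
        rewrite !(P_bdQ' (S k') ltac:(lia)), !(P_rho' (S (S k')) ltac:(lia)).
        intros Ha Ha' (h & Hh). simpl in Hh.
        assert (GHk := rgrp HH (S (S k')) ltac:(lia)).
        assert (GH1 := rgrp HH (S (S (S k'))) ltac:(lia)).
        assert (GQk := rgrp HQ (S (S k')) ltac:(lia)).
        assert (Hb := rbdhom HH (S (S k')) ltac:(lia)).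
        rewrite (central_div GHk) in Hh;
          [| apply (rcentral HH Hn (S (S k')) ltac:(lia)) | apply (rcentral HH Hn (S (S k')) ltac:(lia))].
        assert (Ew : bd H (S (S k')) (gmul (fst c) (ginv (fst c'))) =
                     gmul (bd H (S (S k')) (fst c)) (ginv (bd H (S (S k')) (fst c')))).
        { rewrite Hb, (homV GH1 GHk _ Hb). reflexivity. }
        assert (Him : exists h', bd H (S (S k')) h' = gmul (p (S (S k')) a) (ginv (p (S (S k')) a'))).
        { exists (gmul h (ginv (gmul (fst c) (ginv (fst c'))))).
          rewrite Hb, (homV GH1 GHk _ Hb), Ew, Hh, <- (gA GHk), (gVr GHk), (g1r GHk). reflexivity. }
        destruct (HB a a' Ha Ha' Him) as (q & Hq).
        rewrite (Pinv' (S (S k')) ltac:(lia)), (Pmul' (S (S k')) ltac:(lia)).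
        exists (gmul (gmul c (ginv c')) (nab (S (S (S k'))) q)).
        rewrite <- (Peq' (S (S k')) ltac:(lia) (gmul a (ginv a')) (gmul c (ginv c')) q), <- Hq, (gVr GQk).
        reflexivity.
    + replace (S (S k') <? n) with false in * by (symmetry; apply Nat.ltb_ge; lia). split.
      * intros y Hy. destruct (HA y Hy) as (x & Hx & Hpx). exists (nab (S (S k')) x). split.
        -- pose proof (Peq' (S k') ltac:(lia) gone gone x) as E.
           rewrite Hx, (ginv1 (rgrp HQ (S k') ltac:(lia))), (g1l (rgrp HQ (S k') ltac:(lia))),
             (g1l (rgrp HK (S (S k')) ltac:(lia))) in E. exact E.
        -- exact Hpx.
      * intros c c' Hc Hc' Hcc.
        assert (GQ := rgrp HQ (S k') ltac:(lia)).
        assert (GK := rgrp HK (S (S k')) ltac:(lia)).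
        assert (decomp : forall d, qclass (po_N Q K nab (S k')) (gone, d) = @gone (po_P Q K nab (S k')) ->
          exists x, bd Q (S k') x = gone /\ d = nab (S (S k')) x).
        { intros d Hd0.
          assert (Hd : qclass (po_N Q K nab (S k')) (gone, gone) = qclass (po_N Q K nab (S k')) (gone, d))
            by (rewrite Hd0; reflexivity).
          apply (Pinj' (S k') ltac:(lia)) in Hd. destruct Hd as (x & F1 & F2).
          exists x. split.
          - rewrite (g1l GQ) in F1. rewrite <- (ginvK GQ (bd Q (S k') x)), <- F1. apply (ginv1 GQ).
          - rewrite (g1l GK) in F2. exact F2. }
        destruct (decomp c Hc) as (x & Hx & ->). destruct (decomp c' Hc') as (x' & Hx' & ->).
        simpl in Hcc. pose proof (HB x x' Hx Hx' Hcc) as Hxx.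
        assert (GQ2 := rgrp HQ (S (S k')) ltac:(lia)).
        assert (Hm := mhom Hnab (S (S k')) ltac:(lia)).
        rewrite <- (homV GQ2 GK _ Hm), <- Hm, Hxx. apply (hom1 GQ2 GK _ Hm).
Qed.

End Final.


Theorem mainTheorem2 (n : nat) (Q H G : RawRCC)
  (p : RCCmap Q H) (f : RCCmap Q G) :
  3 <= n ->
  is_RCC n Q -> is_RCC n H -> is_RCC n G ->
  is_morphism n Q H p -> trivial_fibration n Q H p ->
  is_morphism n Q G f ->
  let K := prodRCC H G in
  let nabf := pairM Q H G p f in
  let QN := pushout n Q K nabf in
  let comp := compM QN K H (proj1M H G) (po_rho n Q K nabf) in
  is_RCC n QN /\ is_morphism n QN H comp /\ trivial_fibration n QN H comp.
Proof.
  intros Hn HQ HH HG Hp Htf Hf K nabf QN comp.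
  assert (HK := prod_RCC n H G HH HG). assert (Hnab := pair_morph n Q H G p f Hp Hf).
  split; [exact (L_RCC n Q K nabf Hn HQ HK Hnab)|]. split.
  - exact (mcomp n QN K H _ _ (L_rho_morph n Q K nabf Hn HQ HK Hnab) (proj1_morph n H G)).
  - split.
    + exact (T_fib n Q H G p f Hn HQ HH HG Hp Htf Hf).
    + exact (T_we n Q H G p f Hn HQ HH HG Hp Htf Hf).
Qed.
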